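(* Let $G$ be a biconnected series-parallel graph without transitive edges, let $(s,t)$ be a separation pair of $G$, and let $G'$ be a light component of $G$ with respect to $(s,t)$. Then $G'$ is of one of the following forms: (1) $G'$ is a path $s - w - t$ of length two (a single internal vertex $w$ adjacent to both poles); (2) the internal vertices of $G'$ are a vertex $t'$ and a nonempty independent set $V_s$, where $t'$ is adjacent to $t$, and every vertex of $V_s$ is adjacent to $s$ and to $t'$ (and to no other vertex), $t'$ is not adjacent to $s$, and no vertex of $V_s$ is adjacent to $t$; (3) symmetrically, the internal vertices of $G'$ are a vertex $s'$ adjacent to $s$ and a nonempty independent set $V_t$ of vertices each adjacent to $t$ and $s'$ (and to no other vertex), with $s'$ not adjacent to $t$ and no vertex of $V_t$ adjacent to $s$. In particular, if $G'$ has more than one internal vertex, then the set $V_s$ of internal neighbours of $s$ and the set $V_t$ of internal neighbours of $t$ are disjoint independent sets covering all internal vertices, and $|V_s|=1$ or $|V_t|=1$.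
   Context: A biconnected graph is series-parallel if it contains no subdivision of $K_4$. A separation pair of a biconnected graph $G$ is a pair $(s,t)$ of vertices with $G-s-t$ disconnected; a transitive edge is an edge joining the two vertices of a separation pair. A component w.r.t. $(s,t)$ is the subgraph induced by $s$, $t$ and the vertex set of one connected component of $G-s-t$; $s,t$ are its poles and the other vertices are internal vertices. A component is heavy if it has an internal vertex adjacent to neither $s$ nor $t$, and light otherwise (i.e., every internal vertex is adjacent to $s$ or to $t$). *)

(* Defs.v *)
(* A finite simple graph is a symmetric irreflexive
   relation e on a finType T. *)
From mathcomp Require Import all_boot.
Set Implicit Arguments. Unset Strict Implicit. Unset Printing Implicit Defensive.

Section Graphs.
Variables (T : finType) (e : rel T).

Definition induced_rel (S : {set T}) : rel T :=
  [rel x y | [&& e x y, x \in S & y \in S]].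

Definition connected_on (S : {set T}) : Prop :=
  forall x y, x \in S -> y \in S -> connect (induced_rel S) x y.

Definition biconnected : Prop :=
  connected_on [set: T] /\ forall v : T, connected_on [set~ v].

Definition sep_pair (s t : T) : Prop :=
  s != t /\ ~ connected_on (~: [set s; t]).

Definition transitive_edge (u v : T) : Prop := e u v /\ sep_pair u v.

(* simple path from x to y with vertex sequence x :: p *)
Definition gpath (x y : T) (p : seq T) : bool :=
  [&& path e x p, last x p == y & uniq (x :: p)].

Definition inner (x : T) (p : seq T) : seq T := behead (belast x p).

Definition has_K4_subdivision : Prop :=
  exists (b : 'I_4 -> T) (P : 'I_4 -> 'I_4 -> seq T),
    injective b /\
    (forall i j : 'I_4, i < j -> gpath (b i) (b j) (P i j)) /\
    (forall (i j k : 'I_4) v, i < j -> v \in inner (b i) (P i j) -> v != b k) /\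
    (forall (i j k l : 'I_4) v, i < j -> k < l -> (i, j) != (k, l) ->
        v \in inner (b i) (P i j) -> v \notin inner (b k) (P k l)).

(* series-parallel (for biconnected graphs): no subdivision of K4 *)
Definition series_parallel : Prop := ~ has_K4_subdivision.

(* C is the vertex set of a connected component of G - s - t; the
   component w.r.t. (s,t) is G[C :|: [set s; t]], C its internal vertices *)
Definition component_internal (s t : T) (C : {set T}) : Prop :=
  exists2 x, x \in ~: [set s; t] &
    C = [set y in ~: [set s; t] | connect (induced_rel (~: [set s; t])) x y].

Definition light (s t : T) (C : {set T}) : Prop :=
  forall v, v \in C -> e v s || e v t.

Definition independent (S : {set T}) : Prop :=
  forall u v, u \in S -> v \in S -> ~~ e u v.

(* form (2) of the claim, with the roles of s and t given *)
Definition fan_form (s t : T) (C : {set T}) : Prop :=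
  exists (t' : T) (Vs : {set T}),
    [/\ C = t' |: Vs, t' \notin Vs, Vs != set0 & independent Vs] /\
    e t' t /\ ~~ e t' s /\
        forall v, v \in Vs ->
          [/\ e v s, e v t', ~~ e v t & forall u, e v u -> u = s \/ u = t'].

End Graphs.

(* Main.v *)
Require Import Defs.
From mathcomp Require Import all_boot.
Set Implicit Arguments. Unset Strict Implicit. Unset Printing Implicit Defensive.

Definition gcomp (T : finType) (e : rel T) (S : {set T}) (u : T) : {set T} :=
  [set y in S | connect (induced_rel e S) u y].

Lemma ir_sym (T : finType) (e : rel T) (S : {set T}) : symmetric e -> symmetric (induced_rel e S).
Proof. by move=> sy x y; rewrite /induced_rel /= sy; case: (x \in S); case: (y \in S); rewrite ?andbF. Qed.

Lemma ir_mono (T : finType) (e : rel T) (S S' : {set T}) :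
  S \subset S' -> subrel (induced_rel e S) (induced_rel e S').
Proof. by move=> /subsetP sub x y; rewrite /induced_rel /= => /and3P[-> /sub -> /sub ->]. Qed.

Lemma connect_mono (T : finType) (e : rel T) (S S' : {set T}) x y :
  S \subset S' -> connect (induced_rel e S) x y -> connect (induced_rel e S') x y.
Proof.
move=> sub; apply: connect_sub => a b /(ir_mono sub) H; exact: connect1.
Qed.

Lemma closed_connect_in (T : finType) (e : rel T) (S A : {set T}) x y :
  (forall a b, a \in A -> induced_rel e S a b -> b \in A) ->
  connect (induced_rel e S) x y -> x \in A -> y \in A.
Proof.
move=> cl /connectP[p pth ->]; elim: p x pth => //= z p IH x /andP[exz pz] xA.
by apply: IH => //; apply: cl exz.
Qed.

Lemma path_ir (T : finType) (e : rel T) (S : {set T}) x p :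
  path (induced_rel e S) x p -> path e x p /\ {subset p <= S}.
Proof.
elim: p x => [|y p IH] x /=; first by split.
case/andP=> /and3P[exy _ yS] /IH[pp sub]; split; first by rewrite exy.
by move=> z; rewrite inE => /orP[/eqP->|/sub].
Qed.

Lemma comp_sub (T : finType) (e : rel T) (S : {set T}) u : gcomp e S u \subset S.
Proof. by apply/subsetP=> y; rewrite inE => /andP[]. Qed.

Lemma comp_self (T : finType) (e : rel T) (S : {set T}) u : u \in S -> u \in gcomp e S u.
Proof. by move=> uS; rewrite inE uS connect0. Qed.

Lemma comp_closed (T : finType) (e : rel T) (S : {set T}) u y z :
  y \in gcomp e S u -> z \in S -> e y z -> z \in gcomp e S u.
Proof.
rewrite !inE => /andP[yS cy] zS eyz; rewrite zS /=.
by apply: connect_trans cy _; apply: connect1; rewrite /induced_rel /= eyz yS zS.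
Qed.

Lemma comp_connected (T : finType) (e : rel T) (S : {set T}) u :
  symmetric e -> connected_on e (gcomp e S u).
Proof.
move=> sy x y; rewrite !inE => /andP[xS cx] /andP[yS cy].
have cxy : connect (induced_rel e S) x y.
  apply: connect_trans _ cy; rewrite (sym_connect_sym (ir_sym S sy)); exact: cx.
move: cxy => /connectP[p pth ->].
have xC : x \in gcomp e S u by rewrite inE xS cx.
elim: p x xC pth {cx xS} => [|z p IH] x xC /=; first by rewrite connect0.
case/andP=> /and3P[exz xS zS] pz.
have zC : z \in gcomp e S u by apply: comp_closed exz.
apply: connect_trans (IH _ zC pz); apply: connect1; by rewrite /induced_rel /= exz xC zC.
Qed.

Lemma comp_eq (T : finType) (e : rel T) (S : {set T}) u v :
  symmetric e -> v \in gcomp e S u -> gcomp e S v = gcomp e S u.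
Proof.
move=> sy; rewrite inE => /andP[vS cuv]; apply/setP=> y; rewrite !inE.
case: (y \in S) => //=; apply/idP/idP; first exact: connect_trans.
apply: connect_trans; by rewrite (sym_connect_sym (ir_sym S sy)).
Qed.

Lemma comp_disj (T : finType) (e : rel T) (S : {set T}) u v y :
  symmetric e -> v \in S -> y \in gcomp e S u -> y \in gcomp e S v -> v \in gcomp e S u.
Proof.
move=> sy vS yu yv; rewrite -(comp_eq sy yu) (comp_eq sy yv).
exact: comp_self.
Qed.

Lemma sep_lemma (T : finType) (e : rel T) (X K : {set T}) u w :
  u \in K -> w \notin K -> u \notin X -> w \notin X ->
  (forall y z, y \in K -> e y z -> (z \in K) || (z \in X)) ->
  ~ connected_on e (~: X).
Proof.
move=> uK wK uX wX cl con; move: (con u w); rewrite !inE uX wX => /(_ isT isT) c.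
suff : w \in K by rewrite (negbTE wK).
apply: (closed_connect_in _ c uK).
by move=> a b aK; rewrite /induced_rel /= => /and3P[eab _]; rewrite inE => bX; move: (cl _ _ aK eab); rewrite (negbTE bX) orbF.
Qed.

Lemma connected1 (T : finType) (e : rel T) x : connected_on e [set x].
Proof. by move=> a b; rewrite !inE => /eqP-> /eqP->; exact: connect0. Qed.

Lemma connectedU (T : finType) (e : rel T) (A B : {set T}) a b :
  symmetric e -> connected_on e A -> connected_on e B -> a \in A -> b \in B -> e a b ->
  connected_on e (A :|: B).
Proof.
move=> sy cA cB aA bB eab.
have sA : A \subset A :|: B by apply: subsetUl.
have sB : B \subset A :|: B by apply: subsetUr.
have ab : connect (induced_rel e (A :|: B)) a b.
  by apply: connect1; rewrite /induced_rel /= eab !inE aA bB orbT.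
have symc := sym_connect_sym (ir_sym (A :|: B) sy).
have toa : forall x, x \in A -> connect (induced_rel e (A :|: B)) x a.
  by move=> x xA; apply: connect_mono sA _; apply: cA.
have tob : forall x, x \in B -> connect (induced_rel e (A :|: B)) x b.
  by move=> x xB; apply: connect_mono sB _; apply: cB.
move=> x y; rewrite !inE => /orP[xA|xB] /orP[yA|yB].
- by apply: connect_mono sA _; apply: cA.
- by apply: connect_trans (toa _ xA) _; apply: connect_trans ab _; rewrite symc; apply: tob.
- by apply: connect_trans (tob _ xB) _; rewrite symc in ab; apply: connect_trans ab _; rewrite symc; apply: toa.
- by apply: connect_mono sB _; apply: cB.
Qed.

Lemma uniq_path_in (T : finType) (e : rel T) (K : {set T}) a b :
  connect (induced_rel e K) a b -> a \in K ->
  exists q, [/\ path e a q, last a q = b, uniq (a :: q) & {subset a :: q <= K}].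
Proof.
move=> /connectP[p pth ->] aK; case: (shortenP pth) => q pq uq sub.
have [pe qK] := path_ir pq.
exists q; split => // x; rewrite inE => /orP[/eqP->//|/qK//].
Qed.

Lemma PT (T : finType) (e : rel T) (K : {set T}) x y k1 k2 :
  connected_on e K -> x \notin K -> y \notin K -> x != y ->
  k1 \in K -> e x k1 -> k2 \in K -> e k2 y ->
  exists p, gpath e x y p /\ {subset inner x p <= K}.
Proof.
move=> cK xK yK xy k1K ex k2K ey.
have [q [pq lq uq sq]] := uniq_path_in (cK _ _ k1K k2K) k1K.
exists (k1 :: rcons q y); split.
  rewrite /gpath /= ex rcons_path pq lq ey last_rcons eqxx /=.
  have nx : x \notin k1 :: q by apply/negP=> /sq; rewrite (negbTE xK).
  have ny : y \notin k1 :: q by apply/negP=> /sq; rewrite (negbTE yK).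
  have H : uniq (x :: rcons (k1 :: q) y).
    by rewrite cons_uniq rcons_uniq uq ny mem_rcons inE negb_or xy nx.
  by move: H => /=.
rewrite /inner /= belast_rcons /=.
by move=> z zq; apply: sq.
Qed.

Lemma mem_belast_ne (T : eqType) (x v : T) W :
  v \in x :: W -> v != last x W -> v \in belast x W.
Proof. by rewrite lastI mem_rcons inE => /orP[->|]. Qed.

Lemma last_notin_belast (T : eqType) (x : T) W :
  uniq (x :: W) -> last x W \notin belast x W.
Proof. by rewrite lastI rcons_uniq => /andP[]. Qed.

Lemma belast_sub (T : eqType) (x : T) W : {subset belast x W <= x :: W}.
Proof. by move=> v; rewrite lastI mem_rcons inE => ->; rewrite orbT. Qed.

Lemma HIT (T : finType) (e : rel T) (K Z : {set T}) r z0 :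
  connected_on e K -> r \in K -> z0 \in K -> z0 \in Z ->
  exists c W, [/\ c \in Z, path e r W & last r W = c] /\ [/\ uniq (r :: W),
    {subset r :: W <= K} & forall v, v \in belast r W -> v \notin Z].
Proof.
move=> cK rK z0K z0Z.
have [p pth lp] := connectP (cK _ _ rK z0K).
have aux : forall q r, path (induced_rel e K) r q -> last r q \in Z ->
  exists W, [/\ path (induced_rel e K) r W, last r W \in Z &
     forall v, v \in belast r W -> v \notin Z].
  elim=> [|y q IH] r' /=; first by move=> _ H; exists [::].
  case/andP=> ery pq lq; case rZ: (r' \in Z); first by exists [::]; rewrite /= rZ.
  have [W [pW lW bW]] := IH _ pq lq; exists (y :: W); split => //=; first by rewrite ery.
  by move=> v; rewrite inE => /orP[/eqP->|/bW]; rewrite ?rZ.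
have lZ : last r p \in Z by rewrite -lp.
have [W [pW lW bW]] := aux _ _ pth lZ.
have [W' [pW' uW' sW' lWe]] : exists W', [/\ path (induced_rel e K) r W', uniq (r::W'),
   {subset W' <= W} & last r W' = last r W].
  by case: (shortenP pW) => W' *; exists W'.
have [pe sK] := path_ir pW'.
exists (last r W'), W'; split; split => //; first by rewrite lWe.
  by move=> v; rewrite inE => /orP[/eqP->|/sK].
move=> v vb; have vn : v != last r W.
  by rewrite -lWe; apply/negP=> /eqP ve; move: (last_notin_belast uW'); rewrite -ve vb.
have vW : v \in r :: W.
  by move: (belast_sub vb); rewrite !inE => /orP[->//|/sW' ->]; rewrite orbT.
exact: bW (mem_belast_ne vW vn).
Qed.

Lemma rev_route (T : eqType) (r : rel T) a W : symmetric r -> path r a W -> uniq (a :: W) ->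
  [/\ path r (last a W) (rev (belast a W)),
      last (last a W) (rev (belast a W)) = a,
      uniq (last a W :: rev (belast a W)) &
      forall v, (v \in belast (last a W) (rev (belast a W))) = (v \in W)].
Proof.
move=> sy pW uW.
set c := last a W; set R := rev (belast a W).
have E : c :: R = rcons (rev W) a by rewrite /R -rev_rcons -lastI rev_cons.
split.
- rewrite /c /R rev_path; apply: sub_path pW => x y; by rewrite sy.
- by have := congr1 (last c) E; rewrite /= last_rcons.
- by rewrite E -rev_cons rev_uniq.
- move=> v; have := E; rewrite lastI => /rcons_inj[-> _]; by rewrite mem_rev.
Qed.

Definition rt (T : finType) (e : rel T) (K : {set T}) p c W :=
  [/\ path e p W, last p W = c, uniq (p :: W) & {subset p :: W <= K}].

Lemma TRI (T : finType) (e : rel T) (K : {set T}) p1 p2 p3 :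
  symmetric e -> connected_on e K -> p1 \in K -> p2 \in K -> p3 \in K ->
  exists c W1 W2 W3, [/\ c \in K, rt e K p1 c W1, rt e K p2 c W2 & rt e K p3 c W3] /\
   [/\ forall v, v \in belast p1 W1 -> v \in belast p2 W2 -> False,
       forall v, v \in belast p1 W1 -> v \in belast p3 W3 -> False &
       forall v, v \in belast p2 W2 -> v \in belast p3 W3 -> False].
Proof.
move=> sy cK k1 k2 k3.
have [q [pq lq uq sq]] := uniq_path_in (cK _ _ k1 k2) k1.
have p1Z : p1 \in [set x in p1 :: q] by rewrite inE mem_head.
have [c [W3 [[cZ pW3 lW3] [uW3 sW3 bW3]]]] := HIT cK k3 k1 p1Z.
move: cZ; rewrite inE => cq.
case: (splitPl cq) pq lq uq sq bW3 => Q1 Q2 lQ1.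
rewrite cat_path last_cat lQ1 => /andP[pQ1 pQ2] lQ2 uq sq bW3.
have uq' : uniq ((p1 :: Q1) ++ Q2) by [].
move: uq'; rewrite cat_uniq => /and3P[uQ1 hQ _].
have cQ1 : c \in p1 :: Q1 by rewrite -lQ1 mem_last.
have cQ2 : c \notin Q2 by apply/negP=> cQ2; move/hasP: hQ; apply; exists c.
have uQ2 : uniq (c :: Q2).
  by rewrite /= cQ2; move: uq; rewrite /= cat_uniq => /andP[_ /and3P[]].
have [pR lR uR bR] := rev_route sy pQ2 uQ2.
rewrite lQ2 in pR lR uR bR.
exists c, Q1, (rev (belast c Q2)), W3; split; split => //.
- by apply: sW3; rewrite -lW3 mem_last.
- split => // v vQ; apply: sq; by rewrite -cat_cons mem_cat vQ.
- split => // v; rewrite inE => /orP[/eqP->//|].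
  rewrite mem_rev => /belast_sub; rewrite inE => /orP[/eqP->|vQ2].
    by apply: sq; rewrite -cat_cons mem_cat cQ1.
  by apply: sq; rewrite -cat_cons mem_cat vQ2 orbT.
- move=> v /belast_sub v1; rewrite bR => v2.
  by move/hasP: hQ; apply; exists v.
- move=> v /belast_sub v1 /bW3; rewrite inE.
  by move: v1; rewrite !inE => /orP[->//|]; rewrite mem_cat => ->; rewrite orbT.
- move=> v; rewrite bR => v2 /bW3; rewrite inE.
  by rewrite inE mem_cat v2 !orbT.
Qed.


Ltac disj_tac := match goal with H : is_true (~~ has _ _) |- _ =>
   move/hasP: H; apply; eexists; eassumption end.

Lemma K4_of (T : finType) (e : rel T) b0 b1 b2 b3 p01 p02 p03 p12 p13 p23 :
  gpath e b0 b1 p01 -> gpath e b0 b2 p02 -> gpath e b0 b3 p03 ->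
  gpath e b1 b2 p12 -> gpath e b1 b3 p13 -> gpath e b2 b3 p23 ->
  uniq (inner b0 p01 ++ inner b0 p02 ++ inner b0 p03 ++ inner b1 p12 ++
        inner b1 p13 ++ inner b2 p23 ++ [:: b0; b1; b2; b3]) ->
  has_K4_subdivision e.
Proof.
move=> g01 g02 g03 g12 g13 g23 U.
exists (fun i : 'I_4 => nth b0 [:: b0; b1; b2; b3] i).
exists (fun i j : 'I_4 => nth [::] (nth [::] [:: [:: [::]; p01; p02; p03];
   [:: [::]; [::]; p12; p13]; [:: [::]; [::]; [::]; p23]] i) j).
have Ub := U; do 6 (rewrite cat_uniq in Ub; case/and3P: Ub => _ _ Ub).
move: U; rewrite !cat_uniq !has_cat /= !negb_or ?inE ?negb_or.
move=> H; repeat match goal with | h : is_true (_ && _) |- _ => case/andP: h => ? ? end.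
split; [|split; [|split]].
- move=> i j /eqP E; apply: val_inj; apply/eqP; by move: E; rewrite (@nth_uniq _ b0 [:: b0; b1; b2; b3] i j (ltn_ord i) (ltn_ord j) Ub).
- move=> [[|[|[|[|i]]]] Hi] [[|[|[|[|j]]]] Hj] //=.
  all: try by rewrite !ltnS ltn0 in Hi.
  all: try by rewrite !ltnS ltn0 in Hj.
- move=> [[|[|[|[|i]]]] Hi] [[|[|[|[|j]]]] Hj] [[|[|[|[|k]]]] Hk] v //= _ vin.
  all: try by rewrite !ltnS ltn0 in Hi.
  all: try by rewrite !ltnS ltn0 in Hj.
  all: try by rewrite !ltnS ltn0 in Hk.
  all: try by move: vin; rewrite /inner /= in_nil.
  all: try (apply/negP => /eqP E).
  all: subst; try match goal with h : is_true (_ \notin _) |- _ => by rewrite vin in h end.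
- move=> [[|[|[|[|i]]]] Hi] [[|[|[|[|j]]]] Hj] [[|[|[|[|k]]]] Hk] [[|[|[|[|l]]]] Hl] v //= _ _ _ v1.
  all: try by rewrite !ltnS ltn0 in Hi.
  all: try by rewrite !ltnS ltn0 in Hj.
  all: try by rewrite !ltnS ltn0 in Hk.
  all: try by rewrite !ltnS ltn0 in Hl.
  all: try by move: v1; rewrite /inner /= in_nil.
  all: apply/negP => v2.
  all: try by move: v2; rewrite /inner /= in_nil.
  all: disj_tac.
Qed.

Lemma inner_props (T : finType) (x : T) p :
  uniq (x :: p) -> [/\ uniq (inner x p), x \notin inner x p & last x p \notin inner x p].
Proof.
case: p => [|y p]; first by rewrite /inner.
rewrite /inner cons_uniq => /andP[xn up]; split => /=.
- by move: up; rewrite lastI rcons_uniq => /andP[].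
- by apply/negP => /belast_sub; rewrite (negbTE xn).
- exact: last_notin_belast.
Qed.

Lemma gpath_edge (T : finType) (e : rel T) x y : e x y -> x != y -> gpath e x y [:: y].
Proof. by move=> exy xy; rewrite /gpath /= exy eqxx /= inE xy. Qed.

Lemma gpath_rt (T : finType) (e : rel T) (K : {set T}) x k c W :
  e x k -> x \notin K -> rt e K k c W -> gpath e x c (k :: W).
Proof.
move=> exk xK [pW lW uW sW]; rewrite /gpath /= exk pW lW eqxx /=.
rewrite -[_ && uniq W]/(uniq (k :: W)) uW andbT; apply/negP => /sW.
by rewrite (negbTE xK).
Qed.

Lemma GL (T : finType) (e : rel T) x1 x2 x3 p (A K : {set T}) :
  symmetric e -> e x1 x2 -> e x2 x3 -> gpath e x1 x3 p -> {subset inner x1 p <= A} ->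
  x1 != x2 -> x2 != x3 -> x1 != x3 -> x2 \notin A ->
  x1 \notin K -> x2 \notin K -> x3 \notin K -> (forall v, v \in A -> v \in K -> False) ->
  connected_on e K -> (exists2 k, k \in K & e x1 k) -> (exists2 k, k \in K & e x2 k) ->
  (exists2 k, k \in K & e x3 k) ->
  has_K4_subdivision e.
Proof.
move=> sy e12 e23 gp pA n12 n23 n13 x2A x1K x2K x3K dAK' cK [k1 k1K e1] [k2 k2K e2] [k3 k3K e3].
have [c [W1 [W2 [W3 [[cK' r1 r2 r3] [d12 d13 d23]]]]]] := TRI sy cK k1K k2K k3K.
apply: (@K4_of T e x1 x2 x3 c [:: x2] p (k1 :: W1) [:: x3] (k2 :: W2) (k3 :: W3)).
- exact: gpath_edge.
- exact: gp.
- exact: gpath_rt r1.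
- exact: gpath_edge.
- exact: gpath_rt r2.
- exact: gpath_rt r3.
have [ip x1p x3p] : [/\ uniq (inner x1 p), x1 \notin inner x1 p & x3 \notin inner x1 p].
  by move: gp => /and3P[_ /eqP <- /inner_props].
have bK : forall k W, rt e K k c W -> forall v, v \in belast k W -> v \in K.
  by move=> k W [_ _ _ sW] v /belast_sub /sW.
have bc : forall k W, rt e K k c W -> c \notin belast k W.
  by move=> k W [_ <- uW _]; apply: last_notin_belast.
have bu : forall k W, rt e K k c W -> uniq (belast k W).
  by move=> k W [_ _ uW _]; move: uW; rewrite lastI rcons_uniq => /andP[].
have cA : c \notin A by apply/negP => /dAK'; apply.
have i1 : inner x1 (k1 :: W1) = belast k1 W1 by [].
have i2 : inner x2 (k2 :: W2) = belast k2 W2 by [].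
have i3 : inner x3 (k3 :: W3) = belast k3 W3 by [].
have i4 : forall x y : T, inner x [:: y] = [::] by [].
rewrite i1 i2 i3 !i4 /= !cat_uniq !has_cat /= !negb_or.
have nK : forall x k W, x \notin K -> rt e K k c W -> x \notin belast k W.
  by move=> x k W xK r; apply/negP => /(bK _ _ r); rewrite (negbTE xK).
have xc : forall x, x \notin K -> x != c.
  by move=> x xK; apply/negP => /eqP E; move: xK; rewrite E cK'.
repeat (apply/andP; split) => //;
 try exact: bu r1; try exact: bu r2; try exact: bu r3;
 try exact: bc r1; try exact: bc r2; try exact: bc r3;
 try exact: nK r1; try exact: nK r2; try exact: nK r3;
 try exact: xc.
all: try (apply/negP => /pA; by rewrite ?(negbTE x2A) ?(negbTE cA)).
all: apply/hasPn => v vY; apply/negP => vX.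
- exact: dAK' (pA _ vX) (bK _ _ r1 _ vY).
- exact: dAK' (pA _ vX) (bK _ _ r2 _ vY).
- exact: dAK' (pA _ vX) (bK _ _ r3 _ vY).
- exact: d12 vX vY.
- exact: d13 vX vY.
- exact: d23 vX vY.
Qed.

Lemma comp_mono (T : finType) (e : rel T) (S S' : {set T}) u0 u :
  S' \subset S -> u \in gcomp e S u0 -> gcomp e S' u \subset gcomp e S u0.
Proof.
move=> sub uC; apply/subsetP => y; rewrite !inE => /andP[yS' cy].
move: uC; rewrite inE => /andP[uS cu].
rewrite (subsetP sub _ yS') /=; apply: connect_trans cu _; exact: connect_mono cy.
Qed.

Lemma NBgen (T : finType) (e : rel T) (X3 : {set T}) a b c w :
  symmetric e -> (forall u v, ~ transitive_edge e u v) -> e b c -> b != c ->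
  w \notin X3 -> a \in X3 -> b \in X3 -> c \in X3 -> a \notin [set b; c] ->
  (forall z, z \in X3 -> z != a -> z \in [set b; c]) ->
  exists2 k, k \in gcomp e (~: X3) w & e a k.
Proof.
move=> sy ntr ebc nbc wX aX bX cX aY XY.
case: (boolP [exists k, (k \in gcomp e (~: X3) w) && e a k]) => [/existsP[k /andP[]]|/existsPn H].
  by move=> *; exists k.
exfalso; apply: (ntr b c); split => //; split => //.
apply: (@sep_lemma T e [set b; c] (gcomp e (~: X3) w) w a).
- by apply: comp_self; rewrite inE.
- by apply/negP => /(subsetP (comp_sub _ _ _)); rewrite inE aX.
- by rewrite !inE; apply/negP => /orP[/eqP E|/eqP E]; move: wX; rewrite E ?bX ?cX.
- exact: aY.
- move=> y z yK eyz; case zX: (z \in X3).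
    case za: (z == a).
      by move/eqP: za => za; subst z; move: (H y); rewrite yK sy eyz.
    by rewrite XY ?za ?orbT.
  by rewrite (comp_closed yK _ eyz) // inE zX.
Qed.

Lemma TF (T : finType) (e : rel T) x y z w :
  symmetric e -> irreflexive e -> (forall u v, ~ transitive_edge e u v) -> ~ has_K4_subdivision e ->
  e x y -> e y z -> e x z -> w \notin [set x; y; z] -> False.
Proof.
move=> sy irr ntr nK exy eyz exz wX.
have nxy : x != y by apply/negP => /eqP E; move: exy; rewrite E irr.
have nyz : y != z by apply/negP => /eqP E; move: eyz; rewrite E irr.
have nxz : x != z by apply/negP => /eqP E; move: exz; rewrite E irr.
set X3 := [set x; y; z].
have xX : x \in X3 by rewrite !inE eqxx.
have yX : y \in X3 by rewrite !inE eqxx orbT.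
have zX : z \in X3 by rewrite !inE eqxx !orbT.
set K := gcomp e (~: X3) w.
have [kx kxK ekx] : exists2 k, k \in K & e x k.
  apply: (NBgen (b := y) (c := z)) => //; first by rewrite !inE negb_or nxy.
  by move=> u; rewrite !inE => /orP[/orP[->|->]|->]; rewrite ?orbT.
have [ky kyK eky] : exists2 k, k \in K & e y k.
  apply: (NBgen (b := x) (c := z)) => //; first by rewrite !inE negb_or eq_sym nxy.
  by move=> u; rewrite !inE => /orP[/orP[->|->]|->]; rewrite ?orbT.
have [kz kzK ekz] : exists2 k, k \in K & e z k.
  apply: (NBgen (b := x) (c := y)) => //; first by rewrite !inE negb_or !(eq_sym z) nxz.
  by move=> u; rewrite !inE => /orP[/orP[->|->]|->]; rewrite ?orbT.
have nK' : forall u, u \in X3 -> u \notin K.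
  by move=> u uX; apply/negP => /(subsetP (comp_sub _ _ _)); rewrite inE uX.
apply: nK; apply: (@GL T e x y z [:: z] set0 K) => //.
- exact: gpath_edge exz nxz.
- by rewrite inE.
- exact: nK'.
- exact: nK'.
- exact: nK'.
- by move=> v; rewrite inE.
- exact: comp_connected.
- by exists kx.
- by exists ky.
- by exists kz.
Qed.

Lemma pole_adj (T : finType) (e : rel T) a b y0 :
  symmetric e -> connected_on e [set~ a] -> a != b -> y0 \in ~: [set a; b] ->
  exists2 k, k \in gcomp e (~: [set a; b]) y0 & e b k.
Proof.
move=> sy ca ab y0S.
case: (boolP [exists k, (k \in gcomp e (~: [set a; b]) y0) && e b k]) => [/existsP[k /andP[]]|/existsPn H].
  by move=> *; exists k.
exfalso; apply: (@sep_lemma T e [set a] (gcomp e (~: [set a; b]) y0) y0 b) => //.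
- exact: comp_self.
- by apply/negP => /(subsetP (comp_sub _ _ _)); rewrite !inE eqxx orbT.
- by move: y0S; rewrite !inE negb_or => /andP[].
- by rewrite inE eq_sym.
move=> y z yK eyz; case zS: (z \in ~: [set a; b]).
  by rewrite (comp_closed yK zS eyz).
move: zS; rewrite !inE => /negbFE /orP[->|/eqP E]; first by rewrite orbT.
by subst z; move: (H y); rewrite yK sy eyz.
Qed.

Lemma fan (T : finType) (e : rel T) a b (C : {set T}) :
  symmetric e -> connected_on e [set~ a] -> a \notin C -> b \notin C ->
  (forall v u, v \in C -> e v u -> [|| u \in C, u == a | u == b]) ->
  [disjoint [set v in C | e a v] & [set v in C | e b v]] ->
  independent e [set v in C | e a v] ->
  [set v in C | e a v] :|: [set v in C | e b v] = C ->
  [set v in C | e a v] != set0 -> #|[set v in C | e b v]| == 1 ->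
  fan_form e a b C.
Proof.
set Va := [set v in C | e a v]; set Vb := [set v in C | e b v].
move=> sy ca aC bC nb dis ind UC ne /cards1P[b' Vb'].
have b'Vb : b' \in Vb by rewrite Vb' inE.
have notboth : forall v, v \in Va -> v \in Vb -> False.
  by move=> v va vb; move: (disjointFr dis va); rewrite vb.
move: (b'Vb); rewrite inE => /andP[b'C eb'].
exists b', Va; split; [split|split; [|split]].
- by rewrite -UC Vb' setUC.
- by apply/negP => /notboth; apply.
- exact: ne.
- exact: ind.
- by rewrite sy.
- by apply/negP => eb'a; apply: (notboth b') => //; rewrite inE b'C sy.
move=> v vVa; move: (vVa); rewrite inE => /andP[vC eav].
have nvb : ~~ e v b by apply/negP => evb; apply: (notboth v) => //; rewrite inE vC sy.
have nbrs : forall u, e v u -> u = a \/ u = b'.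
  move=> u evu; case/or3P: (nb v u vC evu) => [uC|/eqP->|/eqP E];
    [|by left|by move: evu; rewrite E (negbTE nvb)].
  have : u \in Va :|: Vb by rewrite UC.
  rewrite inE => /orP[uVa|]; first by move: (ind _ _ vVa uVa); rewrite evu.
  by rewrite Vb' inE => /eqP->; right.
split => //; first by rewrite sy.
case: (boolP (e v b')) => // nvb'.
exfalso; apply: (@sep_lemma T e [set a] [set v] v b) => //.
- by rewrite inE.
- by rewrite inE; apply/negP => /eqP E; move: bC; rewrite E vC.
- by rewrite inE; apply/negP => /eqP E; move: aC; rewrite -E vC.
- rewrite inE eq_sym; apply/negP => /eqP E; apply: (notboth b') => //.
  by rewrite inE b'C E.
move=> y z; rewrite inE => /eqP -> evz; case: (nbrs z evz).
  by move=> ->; rewrite !inE eqxx orbT.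
by move=> E; move: evz; rewrite E (negbTE nvb').
Qed.

Theorem claim6 (T : finType) (e : rel T) (s t : T) (C : {set T}) :
  symmetric e -> irreflexive e ->
  biconnected e -> series_parallel e ->
  (forall u v, ~ transitive_edge e u v) ->
  sep_pair e s t ->
  component_internal e s t C -> light e s t C ->
  ((exists w, [/\ C = [set w], e s w & e w t])
   \/ fan_form e s t C \/ fan_form e t s C) /\
  (1 < #|C| ->
     let Vs := [set v in C | e s v] in
     let Vt := [set v in C | e t v] in
     [/\ [disjoint Vs & Vt], independent e Vs, independent e Vt,
         Vs :|: Vt = C & (#|Vs| == 1) || (#|Vt| == 1)]).
Proof.
move=> sy irr [conT cutf] spar ntr [st ncS] [x0 x0S CE] light.
set S := ~: [set s; t].
have CE' : C = gcomp e S x0 by rewrite CE.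
have nst : ~~ e s t by apply/negP => est; apply: (ntr s t); split.
have cC : connected_on e C by rewrite CE'; apply: comp_connected.
have CS : forall v, v \in C -> v \in S by move=> v; rewrite CE' => /(subsetP (comp_sub _ _ _)).
have sS : s \notin S by rewrite !inE eqxx.
have tS : t \notin S by rewrite !inE eqxx orbT.
have sC : s \notin C by apply/negP => /CS; rewrite (negbTE sS).
have tC : t \notin C by apply/negP => /CS; rewrite (negbTE tS).
have [d dS dC] : exists2 d, d \in S & d \notin C.
  case: (boolP [exists d, (d \in S) && (d \notin C)]) => [/existsP[d /andP[]]|/existsPn H].
    by move=> *; exists d.
  exfalso; apply: ncS => x y xS yS.
  move: (H x) (H y); rewrite xS yS /= !negbK CE' !inE => /andP[_ cx] /andP[_ cy].
  apply: connect_trans _ cy; by rewrite (sym_connect_sym (ir_sym _ sy)).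
set D := gcomp e S d.
have DC : forall y, y \in D -> y \in C -> False.
  move=> y yD yC; move: dC; rewrite CE' => /negP; apply.
  by apply: (comp_disj sy dS) yD; rewrite -CE'.
have cD : connected_on e D by apply: comp_connected.
have DS : forall v, v \in D -> v \in S by move=> v /(subsetP (comp_sub _ _ _)).
have sD : s \notin D by apply/negP => /DS; rewrite (negbTE sS).
have tD : t \notin D by apply/negP => /DS; rewrite (negbTE tS).
have Sts : S = ~: [set t; s] by rewrite /S setUC.
have [dt dtD edt] : exists2 k, k \in D & e t k.
  exact: (pole_adj sy (cutf s) st dS).
have [ds dsD eds] : exists2 k, k \in D & e s k.
  rewrite /D Sts; apply: (pole_adj sy (cutf t)); first by rewrite eq_sym.
  by rewrite -Sts.
have [ct ctC ect] : exists2 k, k \in C & e t k.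
  rewrite CE'; exact: (pole_adj sy (cutf s) st x0S).
have [cs csC ecs] : exists2 k, k \in C & e s k.
  rewrite CE' Sts; apply: (pole_adj sy (cutf t)); first by rewrite eq_sym.
  by rewrite -Sts.
have [pD [gpD ipD]] : exists p, gpath e s t p /\ {subset inner s p <= D}.
  by apply: (PT cD sD tD st dsD eds dtD); rewrite sy.
have nbC : forall v u, v \in C -> e v u -> [|| u \in C, u == s | u == t].
  move=> v u vC evu; case uS: (u \in S).
    by rewrite CE' (comp_closed _ uS evu) // -CE'.
  by move: uS; rewrite !inE => /negbFE ->; rewrite orbT.
have Cx0 : forall u, u \in C -> connect (induced_rel e S) x0 u.
  by move=> u; rewrite CE' inE => /andP[].
have Cconn : forall u v, u \in C -> v \in C -> connect (induced_rel e S) u v.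
  move=> u v uC vC; apply: connect_trans (Cx0 _ vC).
  by rewrite (sym_connect_sym (ir_sym _ sy)); apply: Cx0.
have neqC : forall u y, u \in C -> y \notin C -> u != y.
  by move=> u y uC yC; apply/negP => /eqP E; move: yC; rewrite -E uC.
have stepA : forall v u, v \in C -> e s v -> e t v -> u \in C -> u != v -> False.
  move=> v u vC esv etv uC uv.
  set X3 := [set s; t; v]; set K := gcomp e (~: X3) u.
  have sv : s != v by rewrite eq_sym; apply: neqC.
  have tv : t != v by rewrite eq_sym; apply: neqC.
  have su := neqC _ _ uC sC; have tu := neqC _ _ uC tC.
  have uX : u \notin X3 by rewrite !inE !negb_or su tu uv.
  have sX : s \in X3 by rewrite !inE eqxx.
  have tX : t \in X3 by rewrite !inE eqxx orbT.
  have vX : v \in X3 by rewrite !inE eqxx !orbT.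
  have nK : forall y, y \in X3 -> y \notin K.
    by move=> y yX; apply/negP => /(subsetP (comp_sub _ _ _)); rewrite inE yX.
  have KC : forall y, y \in K -> y \in C.
    have sub : ~: X3 \subset S.
      by apply/subsetP => z; rewrite !inE !negb_or => /andP[H _].
    have uC' : u \in gcomp e S x0 by rewrite -CE'.
    by move=> y yK; move/subsetP: (comp_mono sub uC') => /(_ y yK); rewrite -CE'.
  have [kt ktK ekt] : exists2 k, k \in K & e t k.
    apply: (NBgen (b := s) (c := v)) => //.
      by rewrite !inE negb_or eq_sym st tv.
    by move=> z; rewrite !inE => /orP[/orP[->|->]|->]; rewrite ?orbT.
  have [ks ksK eks] : exists2 k, k \in K & e s k.
    apply: (NBgen (b := t) (c := v)) => //.
      by rewrite !inE negb_or st sv.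
    by move=> z; rewrite !inE => /orP[/orP[->|->]|->]; rewrite ?orbT.
  have [kv kvK ekv] : exists2 k, k \in K & e v k.
    case: (boolP [exists k, (k \in K) && e v k]) => [/existsP[k /andP[]]|/existsPn H].
      by move=> *; exists k.
    exfalso; move: (nK _ vX) => /negP; apply.
    apply: (closed_connect_in _ (Cconn _ _ uC vC)); last by apply: comp_self; rewrite inE.
    move=> y z yK; rewrite /induced_rel /= => /and3P[eyz _ zS].
    case zX : (z \in X3); last by apply: (comp_closed yK) => //; rewrite inE zX.
    move: zX; rewrite !inE => /orP[/orP[/eqP E|/eqP E]|/eqP E]; subst z.
    - by move: zS; rewrite (negbTE sS).
    - by move: zS; rewrite (negbTE tS).
    - by move: (H y); rewrite yK sy eyz.
  apply: spar; apply: (@GL T e s v t pD D K) => //.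
  - by rewrite sy.
  - by rewrite eq_sym.
  - by apply/negP => vD; apply: (DC v).
  - exact: nK.
  - exact: nK.
  - exact: nK.
  - by move=> y yD /KC; apply: DC.
  - exact: comp_connected.
  - by exists ks.
  - by exists kv.
  - by exists kt.
have coreC : forall a a' b b', a \in C -> a' \in C -> b \in C -> b' \in C ->
    e s a -> e s a' -> e t b -> e t b' -> ~~ e s b -> ~~ e s b' ->
    b != b' -> a != a' -> e a b -> e a b' -> e b a' -> False.
  move=> a a' b b' aC a'C bC b'C esa esa' etb etb' nsb nsb' bb' aa' eab eab' eba'.
  have neqE : forall x y, e s x -> ~~ e s y -> x != y.
    by move=> x y ex ny; apply/negP => /eqP E; move: ny; rewrite -E ex.
  set X4 := [set s; t; a; b]; set S4 := ~: X4.
  have sub4 : S4 \subset S.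
    apply/subsetP => z; rewrite !inE !negb_or; by case/andP => /andP[-> _].
  have inS4 : forall y, y \in C -> y != a -> y != b -> y \in S4.
    move=> y yC ya yb; rewrite !inE !negb_or ya yb !andbT.
    by move: (CS _ yC); rewrite !inE negb_or.
  have b'S4 : b' \in S4 by apply: inS4 => //; rewrite eq_sym //; exact: neqE esa nsb'.
  have a'S4 : a' \in S4 by apply: inS4 => //; [rewrite eq_sym // | exact: neqE esa' nsb].
  have nK4 : forall z y, y \in X4 -> y \notin gcomp e S4 z.
    by move=> z y yX; apply/negP => /(subsetP (comp_sub _ _ _)); rewrite inE yX.
  have aX : a \in X4 by rewrite !inE eqxx ?orbT ?orTb.
  have bX : b \in X4 by rewrite !inE eqxx ?orbT ?orTb.
  have tX : t \in X4 by rewrite !inE eqxx ?orbT ?orTb.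
  have sX : s \in X4 by rewrite !inE eqxx ?orbT ?orTb.
  have LC : forall z y, z \in C -> y \in gcomp e S4 z -> y \in C.
    move=> z y zC yL; have zC' : z \in gcomp e S x0 by rewrite -CE'.
    by move/subsetP: (comp_mono sub4 zC') => /(_ y yL); rewrite -CE'.
  set L1 := gcomp e S4 b'; set L2 := gcomp e S4 a'.
  have b'L1 : b' \in L1 by apply: comp_self.
  have a'L2 : a' \in L2 by apply: comp_self.
  have ab : a != b by exact: neqE esa nsb.
  have a_t : a != t by exact: neqC aC tC.
  have bt : b != t by exact: neqC bC tC.
  have nsC : forall y, y \in C -> y != s by move=> y yC; exact: neqC yC sC.
  case: (boolP (a' \in L1)) => a'L1.
  - set A := [set s] :|: D.
    have cA : connected_on e A.
      by apply: (connectedU sy (@connected1 _ e s) cD _ dsD eds); rewrite inE.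
    have aA : a \notin A.
      apply/negP; rewrite !in_setU !in_set1 => /orP[/eqP E|aD]; last exact: DC a aD aC.
      by move: sC; rewrite -E aC.
    have tA : t \notin A by rewrite !in_setU !in_set1 negb_or eq_sym st tD.
    have [p [gp ip]] : exists p, gpath e a t p /\ {subset inner a p <= A}.
      apply: (PT cA aA tA a_t (k1 := s) _ _ (k2 := dt)); rewrite ?in_setU ?in_set1 ?eqxx ?dtD ?orbT //.
      by rewrite sy. by rewrite sy.
    apply: spar; apply: (@GL T e a b t p A L1) => //.
    + by rewrite sy.
    + apply/negP; rewrite !in_setU !in_set1 => /orP[/eqP E|bD]; last exact: DC b bD bC.
      by move: sC; rewrite -E bC.
    + exact: nK4.
    + exact: nK4.
    + exact: nK4.
    + move=> y; rewrite !in_setU !in_set1 => /orP[/eqP->|yD] yL.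
        by move: yL; apply/negP; apply: nK4.
      by apply: (DC y) => //; apply: LC yL.
    + exact: comp_connected.
    + by exists b'.
    + by exists a'.
    + by exists b'; rewrite // sy.
  - set K := [set s] :|: D :|: L2.
    have [p [gp ip]] : exists p, gpath e a t p /\ {subset inner a p <= L1}.
      apply: (PT (@comp_connected _ e S4 b' sy) (nK4 _ _ aX) (nK4 _ _ tX) a_t b'L1 eab' b'L1).
      by rewrite sy.
    have cK : connected_on e K.
      apply: (connectedU sy _ (@comp_connected _ e S4 a' sy) _ a'L2 esa'); last by rewrite !in_setU !in_set1 eqxx.
      by apply: (connectedU sy (@connected1 _ e s) cD _ dsD eds); rewrite inE.
    have nKC : forall y, y \in C -> y \in X4 -> y \notin K.
      move=> y yC yX; rewrite !in_setU !in_set1 !negb_or nsC //=; apply/andP; split.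
        by apply/negP => yD; apply: (DC y).
      exact: nK4.
    apply: spar; apply: (@GL T e a b t p L1 K) => //.
    + by rewrite sy.
    + exact: nK4.
    + exact: nKC.
    + exact: nKC.
    + by rewrite !in_setU !in_set1 !negb_or eq_sym st tD /= nK4.
    + move=> y yL; rewrite !in_setU !in_set1 => /orP[/orP[/eqP E|yD]|yL2].
      * by subst y; move: yL; apply/negP; apply: nK4.
      * by apply: (DC y) => //; apply: LC yL.
      * by move: a'L1; rewrite (comp_disj sy a'S4 yL yL2).
    + by exists s; [rewrite !in_setU !in_set1 eqxx | rewrite sy].
    + by exists a'; rewrite // !in_setU !in_set1 a'L2 orbT.
    + by exists dt; rewrite // !in_setU !in_set1 dtD orbT.
have P2 : 1 < #|C| -> [/\ [disjoint [set v in C | e s v] & [set v in C | e t v]],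
     independent e [set v in C | e s v], independent e [set v in C | e t v],
     [set v in C | e s v] :|: [set v in C | e t v] = C &
     (#|[set v in C | e s v]| == 1) || (#|[set v in C | e t v]| == 1)].
  move=> gt1.
  set Vs := [set v in C | e s v]; set Vt := [set v in C | e t v].
  have other : forall v, v \in C -> exists2 u, u \in C & u != v.
    move=> v vC; case/card_gt1P: gt1 => x [y [xC yC xy]].
    case: (eqVneq x v) => [E|xv]; last by exists x.
    by exists y; rewrite // -E eq_sym.
  have dVV : forall v, v \in C -> e s v -> e t v -> False.
    by move=> v vC esv etv; case: (other v vC) => u uC uv; apply: (stepA v u).
  have dis : [disjoint Vs & Vt].
    rewrite -setI_eq0; apply/eqP/setP => v; rewrite !inE.
    by apply/negbTE/negP => /andP[/andP[vC esv] /andP[_ etv]]; apply: (dVV v).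
  have iS : independent e Vs.
    move=> u v; rewrite !inE => /andP[uC esu] /andP[vC esv]; apply/negP => euv.
    apply: (@TF T e s u v t sy irr ntr spar esu euv esv).
    by rewrite !inE !negb_or (eq_sym t s) st (eq_sym t u) (neqC _ _ uC tC) (eq_sym t v) (neqC _ _ vC tC).
  have iT : independent e Vt.
    move=> u v; rewrite !inE => /andP[uC etu] /andP[vC etv]; apply/negP => euv.
    apply: (@TF T e t u v s sy irr ntr spar etu euv etv).
    by rewrite !inE !negb_or st (eq_sym s u) (neqC _ _ uC sC) (eq_sym s v) (neqC _ _ vC sC).
  have UC : Vs :|: Vt = C.
    apply/setP => v; rewrite !inE; case vC: (v \in C) => //=.
    by move: (light v vC); rewrite (sy v s) (sy v t).
  split => //.
  case: (boolP (#|Vs| == 1)) => //= ns; case: (boolP (#|Vt| == 1)) => // nt; exfalso.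
  have g1 : forall V : {set T}, (exists x, x \in V) -> #|V| != 1 -> 1 < #|V|.
    move=> V [x xV] n1; have : 0 < #|V| by apply/card_gt0P; exists x.
    by move: n1; case: #|V| => [|[|n]].
  have sideS : forall y, y \in C -> ~~ e t y -> e s y.
    by move=> y yC; move: (light y yC); rewrite (sy y s) (sy y t); case: (e s y); case: (e t y).
  have sideT : forall y, y \in C -> ~~ e s y -> e t y.
    by move=> y yC; move: (light y yC); rewrite (sy y s) (sy y t); case: (e s y); case: (e t y).
  have csV : exists x, x \in Vs by exists cs; rewrite inE csC ecs.
  have ctV : exists x, x \in Vt by exists ct; rewrite inE ctC ect.
  case/card_gt1P: (g1 Vs csV ns) => a0 [a1 [a0V a1V a01]].
  case/card_gt1P: (g1 Vt ctV nt) => b0 [b1 [b0V b1V b01]].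
  move: (a0V) (a1V) (b0V) (b1V); rewrite !inE => /andP[a0C esa0] /andP[a1C esa1] /andP[b0C etb0] /andP[b1C etb1].
  have nsb : forall y, y \in C -> e t y -> ~~ e s y.
    by move=> y yC ety; apply/negP => esy; apply: (dVV y).
  case: (boolP [exists a, [exists b, [&& a \in Vs, b \in Vt & ~~ e a b]]]).
  - case/existsP => a /existsP[b /and3P[aV bV nab]].
    move: (aV) (bV); rewrite !inE => /andP[aC esa] /andP[bC etb].
    have [q [pq lq uq sq]] := uniq_path_in (cC _ _ bC aC) bC.
    have adjT : forall y x, y \in C -> e t y -> x \in C -> e y x -> ~~ e t x.
      move=> y x yC ety xC eyx; apply/negP => etx.
      by move: (iT y x); rewrite !inE yC ety xC etx eyx => /(_ isT isT).
    have adjS : forall y x, y \in C -> e s y -> x \in C -> e y x -> ~~ e s x.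
      move=> y x yC esy xC eyx; apply/negP => esx.
      by move: (iS y x); rewrite !inE yC esy xC esx eyx => /(_ isT isT).
    case: q pq lq uq sq => [|x1 [|x2 [|x3 q]]] pq lq uq sq /=.
    + by move: lq => /= E; apply: (dVV b bC); rewrite // E.
    + by move: lq pq => /= E /andP[eb _]; subst a; move: nab; rewrite sy eb.
    + move: lq pq => /= E /and3P[ebx1 ex1x2 _]; subst x2.
      have x1C : x1 \in C by apply: sq; rewrite !inE eqxx orbT.
      have esx1 := sideS _ x1C (adjT _ _ bC etb x1C ebx1).
      by move: (adjS _ _ x1C esx1 aC ex1x2); rewrite esa.
    + move: pq => /= /and4P[ebx1 ex1x2 ex2x3 _].
      have x1C : x1 \in C by apply: sq; rewrite !inE eqxx orbT.
      have x2C : x2 \in C by apply: sq; rewrite !inE eqxx !orbT.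
      have x3C : x3 \in C by apply: sq; rewrite !inE eqxx !orbT.
      have esx1 := sideS _ x1C (adjT _ _ bC etb x1C ebx1).
      have nsx2 := adjS _ _ x1C esx1 x2C ex1x2.
      have etx2 := sideT _ x2C nsx2.
      have esx3 := sideS _ x3C (adjT _ _ x2C etx2 x3C ex2x3).
      have bx2 : x2 != b.
        by apply/negP => /eqP E; move: uq; rewrite E /= !inE eqxx !orbT.
      have x13 : x1 != x3.
        by apply/negP => /eqP E; move: uq; rewrite E /= !inE eqxx !orbT andbF.
      apply: (coreC x1 x3 x2 b) => //.
      * exact: nsb.
      * by rewrite sy.
  - move/existsPn => H.
    have adj : forall a b, a \in Vs -> b \in Vt -> e a b.
      move=> a b aV bV; move/existsPn: (H a) => /(_ b).
      by rewrite aV bV /= negbK.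
    apply: (coreC a0 a1 b0 b1) => //.
    + exact: nsb.
    + exact: nsb.
    + exact: adj.
    + exact: adj.
    + by rewrite sy; apply: adj.
split; last exact: P2.
have x0C : x0 \in C by rewrite CE'; apply: comp_self.
case: (leqP #|C| 1) => [le1|gt1].
  have one : forall y, y \in C -> y = x0.
    move=> y yC; case: (eqVneq y x0) => // ne.
    have : 1 < #|C| by apply/card_gt1P; exists y, x0.
    by rewrite ltnNge le1.
  left; exists x0; split.
  - by apply/setP => y; rewrite inE; apply/idP/eqP => [/one//|->//].
  - by rewrite -(one cs csC).
  - by rewrite -(one ct ctC) sy.
right; have [dis iS iT UC c1] := P2 gt1.
case/orP: c1 => c1.
- right; apply: fan => //.
  + move=> v u vC evu; move: (nbC v u vC evu).
    by case: (u \in C); case: (u == s); case: (u == t).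
  + by rewrite disjoint_sym.
  + by rewrite setUC.
  + by apply/set0Pn; exists ct; rewrite inE ctC ect.
- left; apply: fan => //.
  by apply/set0Pn; exists cs; rewrite inE csC ecs.
Qed.
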